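(* Let $G=(G_t)_{t\geq 0}$, $G_t=(V_t,E_t)$, be a dynamic graph generated by D3G3 (with arbitrary parameters $d$, $S_S$, $S_C$ and arbitrary non-null seed graph $G_0$). Write $n_t=|V_t|$ and let $\mathcal{N}^V_t$ denote the vertices nervousness at time $t$. If for all $t>0$ we have $n_t>0$ and $\mathcal{N}^V_t>0$, then $G$ is sustainable.
   Context: Let $\mathbb{T}=[0,1)^2$ be the unit torus (opposite sides identified) with its toroidal Euclidean distance $\mathrm{dist}$. A geometric graph with threshold $d$ on a finite set $V$ of points of $\mathbb{T}$ has edge set $E=\{\{u,v\}: u\neq v\in V,\ \mathrm{dist}(u,v)\leq d\}$. D3G3 (Degree-Driven Dynamic Geometric Graph Generator) takes parameters $d\in(0,\sqrt2/2)$, two sets $S_S,S_C$ of non-negative integers, and a non-null seed geometric graph $G_0$. Given $G_t=(V_t,E_t)$, the graph $G_{t+1}$ is obtained by applying simultaneously to every $v\in V_t$ (with $\deg(v)$ its degree in $G_t$): (conservation rule) $v\in V_{t+1}$, at the same position, iff $\deg(v)\in S_S$; (creation rule) if $\deg(v)\in S_C$, a brand new vertex (distinct from all vertices ever present) is added to $V_{t+1}$ at a position chosen uniformly at random in $\mathbb{T}$, independently of everything else. $V_{t+1}$ contains no other vertices, and $E_{t+1}$ is given by the geometric rule with threshold $d$. The vertices nervousness is $\mathcal{N}^V_t=\frac{|V_{t+1}\triangle V_t|}{|V_{t+1}\cup V_t|}$, where $A\triangle B=(A\cup B)\setminus(A\cap B)$. A dynamic graph $G$ is sustainable if neither of the following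 holds: (1) there is $T\in\mathbb{N}$ with $G_t=(\emptyset,\emptyset)$ for all $t\geq T$; (2) there are $T\in\mathbb{N}$ and $k\geq1$ with $G_t=G_{t+k}$ for all $t\geq T$. *)

(* Defs.v *)
From HB Require Import structures.
From mathcomp Require Import all_boot all_order all_algebra.
From mathcomp Require Import finmap.
From mathcomp Require Import reals.

Set Implicit Arguments.
Unset Strict Implicit.
Unset Printing Implicit Defensive.

Import Order.TTheory GRing.Theory Num.Theory.
Local Open Scope ring_scope.
Local Open Scope fset_scope.

(* Vertices are identified by natural numbers; their positions are given by a
   global map [pos : nat -> point R] (a vertex keeps its position for its whole
   life, and a vertex is never re-created, see [is_D3G3]). *)
Definition point (R : realType) := (R * R)%type.

Definition in_torus (R : realType) (p : point R) : bool :=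
  (0 <= p.1 < 1) && (0 <= p.2 < 1).

Definition tcoord (R : realType) (a b : R) : R :=
  Num.min `|a - b| (1 - `|a - b|).

Definition tdist (R : realType) (p q : point R) : R :=
  Num.sqrt (tcoord p.1 q.1 ^+ 2 + tcoord p.2 q.2 ^+ 2).

(* A graph: a finite vertex set and a finite set of (unordered) edges,
   each edge being a 2-element set of vertices. *)
Definition graph := ({fset nat} * {fset {fset nat}})%type.

Definition null_graph : graph := (fset0, fset0).

Definition geo_graph (R : realType) (d : R) (pos : nat -> point R)
    (V : {fset nat}) : graph :=
  (V, [fset [fset p.1; p.2] | p in
        [fset p in V `*` V | (p.1 != p.2) && (tdist (pos p.1) (pos p.2) <= d)]]).

Definition deg (G : graph) (v : nat) : nat :=
  #|` [fset e in G.2 | v \in e] |.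

(* A (realization of a) dynamic graph generated by D3G3 with parameters
   d, S_S, S_C: the vertex sets are [V t], the graph at time t is
   [geo_graph d pos (V t)]. The random positions of created vertices are
   arbitrary points of the torus (the statement is about every realization). *)
Definition is_D3G3 (R : realType) (d : R) (SS SC : pred nat)
    (pos : nat -> point R) (V : nat -> {fset nat}) : Prop :=
  (forall t v, v \in V t -> in_torus (pos v)) /\
  forall t,
    let G := geo_graph d pos (V t) in
    let creators := [fset v in V t | SC (deg G v)] in
    [fset v in V t | v \in V t.+1] = [fset v in V t | SS (deg G v)] /\
    exists new : nat -> nat,
      {in creators &, injective new} /\
      [fset v in V t.+1 | v \notin V t] = new @` creators /\
      (forall v s, v \in creators -> (s <= t)%N -> new v \notin V s).

Definition nervousness (R : realType) (V : nat -> {fset nat}) (t : nat) : R :=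
  (#|` (V t.+1 `|` V t) `\` (V t.+1 `&` V t) |)%:R / (#|` V t.+1 `|` V t |)%:R.

Definition sustainable (G : nat -> graph) : Prop :=
  ~ (exists T : nat, forall t, (T <= t)%N -> G t = null_graph) /\
  ~ (exists T k : nat, (1 <= k)%N /\ forall t, (T <= t)%N -> G t = G (t + k)%N).

(* Main.v *)
Require Import Defs.
From HB Require Import structures.
From mathcomp Require Import all_boot all_order all_algebra.
From mathcomp Require Import finmap.
From mathcomp Require Import reals.
From mathcomp Require Import zify.
Import Order.TTheory GRing.Theory Num.Theory.
Local Open Scope ring_scope.
Local Open Scope fset_scope.

Lemma new_fresh (R : realType) (d : R) (SS SC : pred nat)
    (pos : nat -> point R) (V : nat -> {fset nat}) :
  is_D3G3 d SS SC pos V -> forall t w s, w \in V t.+1 -> w \notin V t ->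
  (s <= t)%N -> w \notin V s.
Proof.
move=> [_ H] t w s wt wnt st.
have [_ [new [_ [Hn Hf]]]] := H t.
have : w \in [fset v in V t.+1 | v \notin V t] by rewrite !inE wt wnt.
rewrite Hn => /imfsetP [v vc ->].
exact: Hf.
Qed.

Lemma nerv_neq (R : realType) (V : nat -> {fset nat}) t :
  0 < nervousness R V t -> V t.+1 != V t.
Proof.
move=> Hn; apply/negP => /eqP E; move: Hn.
by rewrite /nervousness E fsetUid fsetIid fsetDv cardfs0 mul0r ltxx.
Qed.

Theorem theorem1 (R : realType) (d : R) (SS SC : pred nat)
    (pos : nat -> point R) (V : nat -> {fset nat}) :
  0 < d < Num.sqrt 2 / 2 ->
  V 0%N != fset0 ->
  is_D3G3 d SS SC pos V ->
  (forall t : nat, (0 < t)%N -> (0 < #|` V t |)%N /\ 0 < nervousness R V t) ->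
  sustainable (fun t => geo_graph d pos (V t)).
Proof.
move=> _ _ HD Hpos; split.
  move=> [T HT].
  have := HT T.+1 (leqnSn T) => /(congr1 fst) /= HV.
  have [H1 _] := Hpos T.+1 (ltn0Sn T).
  by move: H1; rewrite HV cardfs0.
move=> [T [k [k1 HT]]].
have HV : forall t, (T <= t)%N -> V t = V (t + k)%N.
  by move=> t /HT /(congr1 fst).
have Hsub : forall t, (T + k <= t)%N -> V t.+1 `<=` V t.
  move=> t tk; apply/fsubsetP => w wt.
  apply/negPn/negP => wnt.
  have := @new_fresh R d SS SC pos V HD t w (t.+1 - k)%N wt wnt ltac:(lia).
  rewrite HV; last by lia.
  have -> : (t.+1 - k + k = t.+1)%N by lia.
  by rewrite wt.
have Hchain : forall a j, (T + k <= a)%N -> V (a + j)%N `<=` V a.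
  move=> a; elim=> [|j IH] ak; first by rewrite addn0.
  rewrite addnS; apply: fsubset_trans (IH ak).
  by apply: Hsub; lia.
set a := (T + k)%N.
have e1 : V a.+1 `<=` V a by apply: Hsub.
have e2 : V (a.+1 + (k - 1))%N `<=` V a.+1 by apply: Hchain; rewrite /a; lia.
have e3 : (a.+1 + (k - 1) = a + k)%N by lia.
rewrite e3 -HV in e2; last by rewrite /a; lia.
have [_ Hn] := Hpos a ltac:(rewrite /a; lia).
move: (@nerv_neq R V a Hn); rewrite eqEfsubset e1 e2.
by [].
Qed.
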